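(* In the ARRU model described in the context: (a) $Y_n\to\infty$ almost surely; (b) $\min\{N_{1,n},N_{2,n}\}\to\infty$ almost surely.
   Context: ARRU model. Fix $0<a\le b<\infty$, a measurable space $S$, probability measures $\mu_1,\mu_2$ on $S$ and a measurable $u:S\to[a,b]$. On a probability space let $(\xi_{1,n})_{n\ge1}$ be i.i.d. with law $\mu_1$, $(\xi_{2,n})_{n\ge1}$ i.i.d. with law $\mu_2$, and $(U_n)_{n\ge1}$ i.i.d. uniform on $(0,1)$, the three sequences mutually independent. Put $D_{j,n}=u(\xi_{j,n})$ ($j=1,2$). Fix $y_{1,0},y_{2,0}>0$, and set $Y_{1,0}=y_{1,0}$, $Y_{2,0}=y_{2,0}$. Let $\mathcal F_0$ be trivial and $\mathcal F_n=\sigma\big(X_i,\ X_i\xi_{1,i}+(1-X_i)\xi_{2,i}:\ i\le n\big)$. Thresholds $\hat\rho_{1,n},\hat\rho_{2,n}$ ($n\ge0$) are $\mathcal F_n$-measurable random variables with values in $(0,1)$ and $\hat\rho_{1,n}\ge\hat\rho_{2,n}$ a.s. Recursively for $n\ge0$: $Y_n=Y_{1,n}+Y_{2,n}$, $Z_n=Y_{1,n}/Y_n$, $W_{1,n}=\mathbf 1\{Z_n\le\hat\rho_{1,n}\}$, $W_{2,n}=\mathbf 1\{Z_n\ge\hat\rho_{2,n}\}$, $X_{n+1}=\mathbf 1\{U_{n+1}<Z_n\}$, $Y_{1,n+1}=Y_{1,n}+X_{n+1}D_{1,n+1}W_{1,n}$, $Y_{2,n+1}=Y_{2,n}+(1-X_{n+1})D_{2,n+1}W_{2,n}$.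 Let $N_{1,n}=\sum_{i=1}^nX_i$ and $N_{2,n}=\sum_{i=1}^n(1-X_i)$. *)

(* Defs.v *)
From HB Require Import structures.
From mathcomp Require Import all_boot all_order all_algebra.
From mathcomp Require Import all_classical all_reals all_analysis.
Set Implicit Arguments. Unset Strict Implicit. Unset Printing Implicit Defensive.
Import Order.TTheory GRing.Theory Num.Theory.
Local Open Scope classical_set_scope.
Local Open Scope ring_scope.

(* Conventions: sequences are 0-indexed with a shift:
   xi1 k, xi2 k, U k stand for xi_{1,k+1}, xi_{2,k+1}, U_{k+1};
   rho1 n, rho2 n stand for hat rho_{1,n}, hat rho_{2,n} (n >= 0, no shift). *)

Section ARRU.
Context {R : realType} {Omega : Type} {S : Type}.
Variables (u : S -> R) (y10 y20 : R) (rho1 rho2 : nat -> Omega -> R)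
  (xi1 xi2 : nat -> Omega -> S) (U : nat -> Omega -> R).

Fixpoint arru_Y12 (n : nat) (w : Omega) : R * R :=
  match n with
  | 0%N => (y10, y20)
  | n'.+1 =>
    let y1 := (arru_Y12 n' w).1 in
    let y2 := (arru_Y12 n' w).2 in
    let z := y1 / (y1 + y2) in
    let x := U n' w < z in
    let w1 := z <= rho1 n' w in
    let w2 := rho2 n' w <= z in
    (y1 + (if x && w1 then u (xi1 n' w) else 0),
     y2 + (if ~~ x && w2 then u (xi2 n' w) else 0))
  end.

Definition arru_Y1 n w := (arru_Y12 n w).1.
Definition arru_Y2 n w := (arru_Y12 n w).2.
Definition arru_Y n w := arru_Y1 n w + arru_Y2 n w.
Definition arru_Z n w := arru_Y1 n w / arru_Y n w.
(* arru_X k w is X_{k+1}(w) (as a boolean) *)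
Definition arru_X (k : nat) (w : Omega) : bool := U k w < arru_Z k w.
(* observed xi at step k+1: X_{k+1} xi_{1,k+1} + (1 - X_{k+1}) xi_{2,k+1} *)
Definition arru_obs (k : nat) (w : Omega) : S :=
  if arru_X k w then xi1 k w else xi2 k w.
Definition arru_N1 (n : nat) (w : Omega) : nat := \sum_(k < n) (arru_X k w : nat).
Definition arru_N2 (n : nat) (w : Omega) : nat := \sum_(k < n) (~~ arru_X k w : nat).

End ARRU.

(* generators of F_n = sigma(X_i, observed xi_i : i <= n) *)
Definition arru_gen {R : realType} {Omega : Type} {dS : measure_display}
  {S : measurableType dS} (u : S -> R) (y10 y20 : R)
  (rho1 rho2 : nat -> Omega -> R) (xi1 xi2 : nat -> Omega -> S)
  (U : nat -> Omega -> R) (n : nat) : set (set Omega) :=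
  [set E | exists2 k : nat, (k < n)%N &
     (E = [set w | arru_X u y10 y20 rho1 rho2 xi1 xi2 U k w]) \/
     (exists2 A : set S, measurable A &
        E = arru_obs u y10 y20 rho1 rho2 xi1 xi2 U k @^-1` A)].

Definition arru_Fmeas {R : realType} {Omega : Type} {dS : measure_display}
  {S : measurableType dS} (u : S -> R) (y10 y20 : R)
  (rho1 rho2 : nat -> Omega -> R) (xi1 xi2 : nat -> Omega -> S)
  (U : nat -> Omega -> R) (n : nat) (f : Omega -> R) : Prop :=
  forall B : set R, measurable B ->
    <<s arru_gen u y10 y20 rho1 rho2 xi1 xi2 U n >> (f @^-1` B).

(* Main.v *)
Require Import Defs.
From HB Require Import structures.
From mathcomp Require Import all_boot all_order all_algebra.
From mathcomp Require Import all_classical all_reals all_analysis.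
From mathcomp Require Import measurable_realfun.
Import Order.TTheory GRing.Theory Num.Theory.
Local Open Scope classical_set_scope.
Local Open Scope ring_scope.
Set Implicit Arguments. Unset Strict Implicit. Unset Printing Implicit Defensive.
Section indep.
Context (R : realType) (dO : measure_display) (Omega : measurableType dO)
  (P : probability Omega R) (dS : measure_display) (S : measurableType dS)
  (mu1 mu2 : probability S R) (xi1 xi2 : nat -> Omega -> S) (U : nat -> Omega -> R).
Hypothesis mxi1 : forall k, measurable_fun setT (xi1 k).
Hypothesis mxi2 : forall k, measurable_fun setT (xi2 k).
Hypothesis mU : forall k, measurable_fun setT (U k).
Hypothesis hind : forall (n : nat) (A B : nat -> set S) (C : nat -> set R),
     (forall k, measurable (A k)) -> (forall k, measurable (B k)) ->
     (forall k, measurable (C k)) ->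
     P [set w | forall k, (k < n)%N -> [/\ A k (xi1 k w), B k (xi2 k w) & C k (U k w)]]
     = (\prod_(k < n) (mu1 (A k) * mu2 (B k) * lebesgue_measure (C k `&` `]0%R, 1%R[)))%E.

Definition rset n (A B : nat -> set S) (C : nat -> set R) : set Omega :=
  [set w | forall k, (k < n)%N -> [/\ A k (xi1 k w), B k (xi2 k w) & C k (U k w)]].

Definition rect n : set (set Omega) :=
  [set E | exists A B C, [/\ (forall k, measurable (A k)), (forall k, measurable (B k)),
     (forall k, measurable (C k)) & E = rset n A B C]].

Lemma rset_meas n A B C : (forall k, measurable (A k)) -> (forall k, measurable (B k)) ->
     (forall k, measurable (C k)) -> measurable (rset n A B C).
Proof.
move=> mA mB mC.
have -> : rset n A B C = \bigcap_k [set w | (k < n)%N -> [/\ A k (xi1 k w), B k (xi2 k w) & C k (U k w)]].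
  apply/seteqP; split => w /= H k.
    by move=> _; exact: H.
  by move=> kn; exact: H.
apply: bigcapT_measurable => k.
case: (ltnP k n) => kn.
  have -> : [set w | true -> [/\ A k (xi1 k w), B k (xi2 k w) & C k (U k w)]]
    = (xi1 k @^-1` A k `&` xi2 k @^-1` B k) `&` U k @^-1` C k.
    apply/seteqP; split => w /=; first by move=> /(_ isT) [].
    by move=> [[? ?] ?].
  apply: measurableI; first apply: measurableI.
  - by rewrite -[X in measurable X]setTI; apply: mxi1.
  - by rewrite -[X in measurable X]setTI; apply: mxi2.
  - by rewrite -[X in measurable X]setTI; apply: mU.
have -> : [set w | false -> [/\ A k (xi1 k w), B k (xi2 k w) & C k (U k w)]] = setT.
  by apply/seteqP; split => w //= _.
exact: measurableT.
Qed.

Lemma rect_meas n E : rect n E -> measurable E.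
Proof. by case=> A [B [C [mA mB mC ->]]]; exact: rset_meas. Qed.

Lemma rect_setI n : setI_closed (rect n).
Proof.
move=> E1 E2 [A [B [C [mA mB mC ->]]]] [A' [B' [C' [mA' mB' mC' ->]]]].
exists (fun k => A k `&` A' k), (fun k => B k `&` B' k), (fun k => C k `&` C' k).
split => [k|k|k|]; try exact: measurableI.
apply/seteqP; split => w /=.
  by move=> [H1 H2] k kn; have [? ? ?] := H1 k kn; have [? ? ?] := H2 k kn.
by move=> H; split => k kn; have [[? ?] [? ?] [? ?]] := H k kn.
Qed.

Lemma rectT n : rect n setT.
Proof.
exists (fun=> setT), (fun=> setT), (fun=> setT); split => //.
by apply/seteqP; split.
Qed.

Lemma rect_mono n m : (n <= m)%N -> rect n `<=` rect m.
Proof.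
move=> nm E [A [B [C [mA mB mC ->]]]].
exists (fun k => if (k < n)%N then A k else setT), (fun k => if (k < n)%N then B k else setT),
  (fun k => if (k < n)%N then C k else setT).
split => [k|k|k|]; try by case: ifP.
apply/seteqP; split => w /=.
  by move=> H k km; case: ifP => kn //; exact: H.
by move=> H k kn; have := H k (leq_trans kn nm); rewrite kn.
Qed.

Lemma Gn_mono n m : (n <= m)%N -> <<s rect n >> `<=` <<s rect m >>.
Proof. by move=> nm; apply: sub_sigma_algebra2; exact: rect_mono. Qed.

Lemma Gn_meas n : <<s rect n >> `<=` measurable.
Proof.
apply: smallest_sub; first exact: sigma_algebra_measurable.
exact: rect_meas.
Qed.

Definition Lm (C : set R) := lebesgue_measure (C `&` `]0%R, 1%R[).

Lemma Lm_fin C : measurable C -> Lm C \is a fin_num.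
Proof.
move=> mC; rewrite ge0_fin_numE //.
apply: (@le_lt_trans _ _ (lebesgue_measure (`]0%R, 1%R[ : set R))).
  by apply: le_measure; rewrite ?inE //; apply: measurableI.
by rewrite lebesgue_measure_itv /= lte01 EFinN sube0 ltry.
Qed.

Lemma LmT : Lm setT = 1%E.
Proof. by rewrite /Lm setTI lebesgue_measure_itv /= lte01 EFinN sube0. Qed.

Lemma indep_rect n E C : rect n E -> measurable C ->
  P (E `&` U n @^-1` C) = (P E * Lm C)%E.
Proof.
move=> [A [B [D [mA mB mD ->]]]] mC.
have -> : rset n A B D `&` U n @^-1` C =
  rset n.+1 (fun k => if (k < n)%N then A k else setT) (fun k => if (k < n)%N then B k else setT)
     (fun k => if (k < n)%N then D k else C).
  apply/seteqP; split => w /=.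
    move=> [H HC] k; rewrite ltnS leq_eqVlt => /orP[/eqP ->|kn].
      by rewrite ltnn.
    by rewrite kn; exact: H.
  move=> H; split; last by have := H n (ltnSn n); rewrite ltnn => -[].
  by move=> k kn; have := H k (ltnW kn); rewrite kn.
rewrite /rset (@hind n.+1 (fun k => if (k < n)%N then A k else setT)
  (fun k => if (k < n)%N then B k else setT) (fun k => if (k < n)%N then D k else C));
  try by move=> k; case: ifP.
rewrite (@hind n A B D) // big_ord_recr /= ltnn !probability_setT !mul1e; congr (_ * _)%E.
by apply: eq_bigr => i _; rewrite ltn_ord.
Qed.

Lemma indep n C : measurable C -> forall G, <<s rect n >> G ->
  P (G `&` U n @^-1` C) = (P G * Lm C)%E.
Proof.
move=> mC.
have mX : measurable (U n @^-1` C) by rewrite -[X in measurable X]setTI; apply: mU.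
have LC := Lm_fin mC.
have finP : forall A, measurable A -> P A \is a fin_num by move=> A mA; exact: fin_num_measure.
have ltyP : forall A, measurable A -> (P A < +oo)%E.
  by move=> A mA; rewrite -ge0_fin_numE ?finP.
suff: <<s rect n >> `<=` [set G | measurable G /\ P (G `&` U n @^-1` C) = (P G * Lm C)%E].
  by move=> H G /H [].
apply: lambda_system_subset.
- exact: rect_setI.
- split => //.
  + split; [exact: measurableT|].
    by rewrite -(indep_rect (rectT n)).
  + move=> A1 B1 BA [mA HA] [mB HB]; split; first exact: measurableD.
    have -> : (A1 `\` B1) `&` U n @^-1` C = (A1 `&` U n @^-1` C) `\` (B1 `&` U n @^-1` C).
      apply/seteqP; split => w /=; first by move=> [[? ?] ?]; split => // -[].
      by move=> [[? ?] H]; split => //; split => // ?; apply: H.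
    rewrite measureD; [|exact: measurableI|exact: measurableI|].
    2: by apply: ltyP; exact: measurableI.
    rewrite measureD //; last by apply: ltyP.
    have -> : A1 `&` U n @^-1` C `&` (B1 `&` U n @^-1` C) = B1 `&` U n @^-1` C.
      apply/seteqP; split => w /=; first by move=> [_ ?].
      by move=> [? ?]; split => //; split => //; apply: BA.
    have -> : A1 `&` B1 = B1.
      by apply/seteqP; split => w /=; [move=> [_ ?]|move=> ?; split => //; apply: BA].
    rewrite muleBl //; last by apply: fin_num_adde_defr; apply: finP.
    by congr (_ - _)%E; [exact: HA|exact: HB].
  + move=> F ndF HF; split.
      by apply: bigcupT_measurable => i; case: (HF i).
    have mF i : measurable (F i) by case: (HF i).
    have h1 := @nondecreasing_cvg_mu _ _ _ P (fun i => F i `&` U n @^-1` C)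
      (fun i => measurableI _ _ (mF i) mX).
    have h2 := @nondecreasing_cvg_mu _ _ _ P F mF (bigcupT_measurable _ mF) ndF.
    have ndX : {homo (fun i : nat => F i `&` U n @^-1` C) : n m / (n <= m)%N >-> (n <= m)%O}.
      move=> i j ij; apply/subsetPset; apply: setSI; apply/subsetPset; exact: ndF.
    have h1' := h1 (bigcupT_measurable _ (fun i => measurableI _ _ (mF i) mX)) ndX.
    have h2' := cvgeZr LC h2.
    rewrite -setI_bigcupl in h1'.
    have e : (fun i => (P (F i) * Lm C)%E) = (P \o (fun i => F i `&` U n @^-1` C)).
      by apply: funext => i /=; rewrite (HF i).2.
    rewrite e in h2'.
    exact: (cvg_unique _ h1' h2').
- move=> X HX; split; [exact: (rect_meas HX)|exact: indep_rect].
- by [].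
Qed.

End indep.
From mathcomp Require Import ring lra.
Section realaux.
Context (R : realType).

Lemma prod_bound (g : nat -> R) n : (forall k, 0 <= g k <= 1) ->
  (\prod_(k < n) (1 - g k)) * (1 + \sum_(k < n) g k) <= 1.
Proof.
move=> hg; elim: n => [|n IH]; first by rewrite !big_ord0 addr0 mulr1.
rewrite !big_ord_recr /=.
set p := \prod_(i < n) _ in IH *; set s := \sum_(i < n) _ in IH *.
have p0 : 0 <= p by apply: prodr_ge0 => i _; have := hg i; lra.
have s0 : 0 <= s by apply: sumr_ge0 => i _; have := hg i; lra.
have := hg n => /andP[g0 g1].
apply: le_trans IH.
have -> : p * (1 - g n) * (1 + (s + g n)) = p * ((1 - g n) * (1 + (s + g n))) by ring.
apply: ler_wpM2l => //; nra.
Qed.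

Lemma arch0 (p K : R) : 0 <= p -> (forall j : nat, p * j%:R <= K) -> p = 0.
Proof.
move=> p0 H; apply/eqP; rewrite eq_le p0 andbT; apply/negP => /negP; rewrite -ltNge => pp.
have hj := truncnS_gt (K / p).
have h2 := H (Num.Def.trunc (K / p)).+1.
rewrite ltr_pdivrMr // in hj.
lra.
Qed.

Lemma harm m j : exists n, (m < n)%N /\
  j%:R / 2 <= \sum_(k < n) (if (m <= k)%N then k.+1%:R^-1 else 0 : R).
Proof.
elim: j => [|j [n [mn IH]]].
  exists m.+1; split => //; rewrite mul0r; apply: sumr_ge0 => i _; case: ifP => // _.
exists (n + n)%N; split; first by rewrite (leq_trans mn) // leq_addr.
rewrite big_split_ord /=.
have H2 : 2^-1 <= \sum_(i < n) (if (m <= n + i)%N then (n + i).+1%:R^-1 else 0 : R).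
  apply: (@le_trans _ _ (\sum_(i < n) (n + n)%:R^-1 : R)).
    rewrite sumr_const card_ord.
    have n0 : (0 < n)%N by apply: leq_ltn_trans mn.
    have nR : 0 < n%:R :> R by rewrite ltr0n.
    have e : (n + n)%:R^-1 *+ n = 2^-1 :> R.
      rewrite -mulr_natr natrD; field.
      by rewrite lt0r_neq0 // addr_gt0.
    by rewrite e.
  apply: ler_sum => i _.
  rewrite (leq_trans (ltnW mn)) ?leq_addr //.
  have h : (n + i).+1%:R <= (n + n)%:R :> R by rewrite ler_nat -addnS leq_add2l.
  rewrite lef_pV2 ?posrE ?ltr0n //; apply: leq_trans (leq_addr _ _); exact: leq_ltn_trans mn.
have -> : j.+1%:R / 2 = j%:R / 2 + 2^-1 :> R by rewrite -natr1 mulrDl mul1r.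
by apply: lerD.
Qed.

End realaux.

Lemma pow_bound (R : realType) (d : R) i : 0 <= d <= 1 -> (1 - d) ^+ i * (1 + d * i%:R) <= 1.
Proof.
move=> hd; have := prod_bound i (fun _ : nat => hd).
by rewrite prodr_const card_ord sumr_const card_ord mulr_natr.
Qed.

Lemma cvg_of_ev (R : realType) (f : nat -> R) :
  (forall A, exists n0, forall n, (n0 <= n)%N -> A <= f n) -> f n @[n --> \oo] --> +oo.
Proof. move=> H; apply/cvgryPge => A. have [n0 h] := H A. by exists n0. Qed.

Lemma mono_le (R : realType) (f : nat -> R) : (forall n, f n <= f n.+1) ->
  forall n m, (n <= m)%N -> f n <= f m.
Proof.
move=> H n m nm; rewrite -(subnKC nm); elim: (m - n)%N => [|i IH]; first by rewrite addn0.
by rewrite addnS; apply: le_trans IH (H _).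
Qed.

Lemma mono_len (f : nat -> nat) : (forall n, (f n <= f n.+1)%N) ->
  forall n m, (n <= m)%N -> (f n <= f m)%N.
Proof.
move=> H n m nm; rewrite -(subnKC nm); elim: (m - n)%N => [|i IH]; first by rewrite addn0.
by rewrite addnS; apply: leq_trans IH (H _).
Qed.

Lemma cnt_unb (f : nat -> bool) : (forall m, exists k, (m <= k)%N /\ f k) ->
  forall j, exists n, (j <= \sum_(k < n) f k)%N.
Proof.
move=> H.
have st : forall n, (\sum_(k < n) f k <= \sum_(k < n.+1) f k)%N.
  by move=> n; rewrite big_ord_recr /= leq_addr.
have mono := mono_len st.
elim=> [|j [n hn]]; first by exists 0%N.
have [k [nk fk]] := H n.
exists k.+1; rewrite big_ord_recr /= fk addn1 ltnS.
apply: leq_trans hn _; exact: mono.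
Qed.
Section lmc.
Context (R : realType).
Lemma Lm_cy (c : R) : 0 < c -> c < 1 -> Lm `[c, +oo[ = (1 - c)%:E.
Proof.
move=> c0 c1; rewrite /Lm.
have -> : `[c, +oo[ `&` `]0%R, 1%R[ = [set` `[c, 1%R[] :> set R.
  apply/seteqP; split => x /=; rewrite !in_itv /= ?andbT.
    by move=> [-> /andP[_ ->]].
  move=> /andP[cx x1]; split => //; apply/andP; split => //.
  exact: lt_le_trans cx.
by rewrite lebesgue_measure_itv /= lte_fin c1 -EFinB.
Qed.

Lemma Lm_ny (c : R) : 0 < c -> c < 1 -> Lm `]-oo, c[ = c%:E.
Proof.
move=> c0 c1; rewrite /Lm.
have -> : `]-oo, c[ `&` `]0%R, 1%R[ = [set` `]0%R, c[] :> set R.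
  apply/seteqP; split => x /=; rewrite !in_itv /= ?andbT.
    by move=> [-> /andP[-> _]].
  move=> /andP[x0 xc]; split => //; apply/andP; split => //.
  exact: lt_trans c1.
by rewrite lebesgue_measure_itv /= lte_fin c0 sube0.
Qed.
End lmc.
Section model.
Context (R : realType) (dO : measure_display) (Omega : measurableType dO)
  (P : probability Omega R) (dS : measure_display) (S : measurableType dS)
  (mu1 mu2 : probability S R) (a b : R) (u : S -> R)
  (xi1 xi2 : nat -> Omega -> S) (U : nat -> Omega -> R)
  (y10 y20 : R) (rho1 rho2 : nat -> Omega -> R).
Hypothesis ha : 0 < a.
Hypothesis hu : forall s, a <= u s <= b.
Hypothesis hy10 : 0 < y10.
Hypothesis hy20 : 0 < y20.

Local Notation Y1 := (arru_Y1 u y10 y20 rho1 rho2 xi1 xi2 U).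
Local Notation Y2 := (arru_Y2 u y10 y20 rho1 rho2 xi1 xi2 U).
Local Notation Y := (arru_Y u y10 y20 rho1 rho2 xi1 xi2 U).
Local Notation Z := (arru_Z u y10 y20 rho1 rho2 xi1 xi2 U).
Local Notation X := (arru_X u y10 y20 rho1 rho2 xi1 xi2 U).

Lemma u_pos s : 0 < u s.
Proof. by have /andP[h _] := hu s; exact: lt_le_trans h. Qed.

Lemma Y1S n w : Y1 n.+1 w =
  Y1 n w + (if X n w && (Z n w <= rho1 n w) then u (xi1 n w) else 0).
Proof. by []. Qed.

Lemma Y2S n w : Y2 n.+1 w =
  Y2 n w + (if ~~ X n w && (rho2 n w <= Z n w) then u (xi2 n w) else 0).
Proof. by []. Qed.

Lemma inc_ge0 (c : bool) s : 0 <= (if c then u s else 0).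
Proof. by case: c => //; exact/ltW/u_pos. Qed.

Lemma Y1_ge n w : y10 <= Y1 n w.
Proof.
elim: n => [|n IH]; first by [].
by rewrite Y1S; apply: le_trans IH _; rewrite lerDl inc_ge0.
Qed.

Lemma Y2_ge n w : y20 <= Y2 n w.
Proof.
elim: n => [|n IH]; first by [].
by rewrite Y2S; apply: le_trans IH _; rewrite lerDl inc_ge0.
Qed.

Lemma Y1_pos n w : 0 < Y1 n w.
Proof. exact: lt_le_trans hy10 (Y1_ge n w). Qed.
Lemma Y2_pos n w : 0 < Y2 n w.
Proof. exact: lt_le_trans hy20 (Y2_ge n w). Qed.
Lemma Y_pos n w : 0 < Y n w.
Proof. by rewrite /arru_Y addr_gt0 // ?Y1_pos ?Y2_pos. Qed.

Lemma Y_le n w : Y n w <= y10 + y20 + b * n%:R.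
Proof.
elim: n => [|n IH]; first by rewrite mulr0 addr0.
rewrite /arru_Y Y1S Y2S.
have h : (if X n w && (Z n w <= rho1 n w) then u (xi1 n w) else 0) +
  (if ~~ X n w && (rho2 n w <= Z n w) then u (xi2 n w) else 0) <= b.
  have ub s : u s <= b by case/andP: (hu s).
  have b0 : 0 <= b by apply: le_trans (ltW (u_pos (xi1 n w))) (ub _).
  by case: (X n w); rewrite /= ?add0r ?addr0; case: ifP => _ //.
rewrite -natr1 mulrDr mulr1.
move: IH h; rewrite /arru_Y; lra.
Qed.

Lemma XE k w : X k w = (U k w * Y k w < Y1 k w).
Proof. by rewrite /arru_X /arru_Z ltr_pdivlMr // Y_pos. Qed.

Lemma ZleE k w r : (Z k w <= r) = (Y1 k w <= r * Y k w).
Proof. by rewrite /arru_Z ler_pdivrMr // Y_pos. Qed.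

Lemma ZgeE k w r : (r <= Z k w) = (r * Y k w <= Y1 k w).
Proof. by rewrite /arru_Z ler_pdivlMr // Y_pos. Qed.

Hypothesis mxi1 : forall k, measurable_fun setT (xi1 k).
Hypothesis mxi2 : forall k, measurable_fun setT (xi2 k).
Hypothesis mU : forall k, measurable_fun setT (U k).
Hypothesis hind : forall (n : nat) (A B : nat -> set S) (C : nat -> set R),
     (forall k, measurable (A k)) -> (forall k, measurable (B k)) ->
     (forall k, measurable (C k)) ->
     P [set w | forall k, (k < n)%N -> [/\ A k (xi1 k w), B k (xi2 k w) & C k (U k w)]]
     = (\prod_(k < n) (mu1 (A k) * mu2 (B k) * lebesgue_measure (C k `&` `]0%R, 1%R[)))%E.

Lemma negU m (C : nat -> set R) (c : nat -> R) (al : R) : 0 < al ->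
  (forall k, measurable (C k)) ->
  (forall k, (m <= k)%N -> Lm (C k) = (1 - c k)%:E /\ al / k.+1%:R <= c k <= 1) ->
  P.-negligible [set w | forall k, (m <= k)%N -> C k (U k w)].
Proof.
move=> al0 mC hC.
pose C' k := if (m <= k)%N then C k else setT.
have mC' k : measurable (C' k) by rewrite /C'; case: ifP.
pose E n := rset xi1 xi2 U n (fun=> setT) (fun=> setT) C'.
have mE n : measurable (E n) := rset_meas mxi1 mxi2 mU n (fun=> measurableT) (fun=> measurableT) mC'.
pose g k := if (m <= k)%N then c k else 0.
have g01 k : 0 <= g k <= 1.
  rewrite /g; case: ifP => mk; last by rewrite lexx ler01.
  have [_ /andP[h1 ->]] := hC k mk.
  by rewrite andbT; apply: le_trans h1; rewrite divr_ge0 // ltW.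
have PE n : P (E n) = (\prod_(k < n) (1 - g k))%:E.
  rewrite /E /rset (@hind n (fun=> setT) (fun=> setT) C') // -prodEFin.
  apply: eq_bigr => k _; rewrite !probability_setT !mul1e /C' /g.
  case: ifP => mk; first by have [<- _] := hC k mk.
  by have := LmT R; rewrite /Lm => ->; rewrite subr0.
have mI : measurable (\bigcap_n E n) by exact: bigcapT_measurable.
exists (\bigcap_n E n); split => //; last first.
  move=> w H n _ k kn; split => //; rewrite /C'; case: ifP => // mk; exact: H.
have fin : P (\bigcap_n E n) \is a fin_num by exact: fin_num_measure.
rewrite -(fineK fin); congr (_%:E).
set p := fine _.
have p0 : 0 <= p by rewrite /p fine_ge0 // measure_ge0.
have pn n : p <= \prod_(k < n) (1 - g k).
  rewrite -lee_fin /p (fineK fin) -PE; apply: le_measure; rewrite ?inE //.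
  exact: bigcap_inf.
apply: (@arch0 R p (2 / al)) => // j.
have [n [mn hn]] := harm R m j.
have hb := prod_bound n g01.
have hs : al * (j%:R / 2) <= \sum_(k < n) g k.
  apply: le_trans (ler_wpM2l (ltW al0) hn) _.
  rewrite mulr_sumr; apply: ler_sum => k _; rewrite /g; case: ifP => mk.
    by have [_ /andP[h _]] := hC k mk.
  by rewrite mulr0.
have h1 : p * (1 + al * (j%:R / 2)) <= 1.
  apply: le_trans hb; apply: ler_pM.
  - exact: p0.
  - by rewrite addr_ge0 // mulr_ge0 // ?ltW // divr_ge0.
  - exact: pn.
  - by rewrite lerD2l.
rewrite ler_pdivlMr //.
have e : p * (1 + al * (j%:R / 2)) = p + p * j%:R * al / 2 by ring.
rewrite e in h1; lra.
Qed.
Definition Dk (k : nat) := y10 + y20 + b * k%:R.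

Lemma b_pos : 0 < b.
Proof. by have /andP[h1 h2] := hu (xi1 0 point); apply: lt_le_trans (u_pos _) h2. Qed.

Lemma Dk_pos k : 0 < Dk k.
Proof.
have : 0 <= b * k%:R by rewrite mulr_ge0 // ltW // b_pos.
rewrite /Dk => h; have := hy10; have := hy20; lra.
Qed.

Lemma Y_le_Dk k w : Y k w <= Dk k.
Proof. exact: Y_le. Qed.

Lemma al_ok (yy : R) k : 0 < yy -> yy <= y10 + y20 ->
  (yy / (y10 + y20 + b)) / k.+1%:R <= yy / Dk k <= 1.
Proof.
move=> yy0 yyl; have hb := b_pos; have hD := Dk_pos k.
have k0 : 0 <= k%:R :> R by [].
apply/andP; split.
  rewrite -mulrA; apply: ler_wpM2l; first exact: ltW.
  have p1 : 0 < (y10 + y20 + b) * k.+1%:R.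
    by rewrite mulr_gt0 ?ltr0n //; have := hy10; have := hy20; lra.
  rewrite -invfM lef_pV2 ?posrE //.
  rewrite /Dk -natr1; nra.
rewrite ler_pdivrMr // mul1r /Dk.
have : 0 <= b * k%:R by rewrite mulr_ge0 // ltW.
lra.
Qed.

Lemma partb1 : P.-negligible [set w | exists m, forall k, (m <= k)%N -> ~~ X k w].
Proof.
pose c k := y10 / Dk k.
have sub : [set w | exists m, forall k, (m <= k)%N -> ~~ X k w] `<=`
  \bigcup_m [set w | forall k, (m <= k)%N -> [set` `[c k, +oo[] (U k w)].
  move=> w [m H]; exists m => // k mk; have := H k mk.
  rewrite XE -leNgt /= in_itv /= andbT => h.
  have hY := Y_pos k w.
  rewrite -(ler_pM2r hY); apply: le_trans h.
  apply: le_trans (Y1_ge k w); rewrite /c mulrAC ler_pdivrMr ?Dk_pos //.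
  by apply: ler_wpM2l; [exact: ltW|exact: Y_le_Dk].
apply: (@negligibleS _ _ _ P _ _ sub); apply: negligible_bigcup => m.
apply: (@negU m (fun k => [set` `[c k, +oo[]) c (y10 / (y10 + y20 + b))).
- by rewrite divr_gt0 // ?addr_gt0 ?b_pos.
- by move=> k; exact: measurable_itv.
move=> k _; split; last by apply: al_ok => //; rewrite lerDl ltW.
apply: Lm_cy; first by rewrite divr_gt0 ?Dk_pos.
rewrite ltr_pdivrMr ?Dk_pos // mul1r /Dk.
have : 0 <= b * k%:R by rewrite mulr_ge0 // ltW // b_pos.
have := hy10; have := hy20; lra.
Qed.

Lemma partb2 : P.-negligible [set w | exists m, forall k, (m <= k)%N -> X k w].
Proof.
pose c k := y20 / Dk k.
have sub : [set w | exists m, forall k, (m <= k)%N -> X k w] `<=`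
  \bigcup_m [set w | forall k, (m <= k)%N -> [set` `]-oo, 1 - c k[] (U k w)].
  move=> w [m H]; exists m => // k mk; have := H k mk.
  rewrite XE /= in_itv /= => h.
  have hY := Y_pos k w.
  rewrite -(ltr_pM2r hY); apply: lt_le_trans h _.
  have e : Y1 k w = Y k w - Y2 k w by rewrite /arru_Y addrK.
  rewrite e mulrBl mul1r lerD2l lerN2.
  apply: le_trans (Y2_ge k w); rewrite /c mulrAC ler_pdivrMr ?Dk_pos //.
  by apply: ler_wpM2l; [exact: ltW|exact: Y_le_Dk].
apply: (@negligibleS _ _ _ P _ _ sub); apply: negligible_bigcup => m.
apply: (@negU m (fun k => [set` `]-oo, 1 - c k[]) c (y20 / (y10 + y20 + b))).
- by rewrite divr_gt0 // ?addr_gt0 ?b_pos.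
- by move=> k; exact: measurable_itv.
move=> k _; split; last by apply: al_ok => //; rewrite lerDr ltW.
have c0 : 0 < c k by rewrite divr_gt0 ?Dk_pos.
have c1 : c k < 1.
  rewrite ltr_pdivrMr ?Dk_pos // mul1r /Dk.
  have : 0 <= b * k%:R by rewrite mulr_ge0 // ltW // b_pos.
  have := hy10; have := hy20; lra.
rewrite Lm_ny //; lra.
Qed.
Local Notation OmT n := (g_sigma_algebraType (rect xi1 xi2 U n)).
Definition mf n (f : Omega -> R) := measurable_fun (setT : set (OmT n)) (f : OmT n -> R).

Lemma mf_mono n n' f : (n <= n')%N -> mf n f -> mf n' f.
Proof.
move=> nn' hf _ B mB; apply: (Gn_mono nn'); exact: hf.
Qed.

Lemma mfU k n : (k < n)%N -> measurable_fun (setT : set (OmT n)) (U k : OmT n -> R).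
Proof.
move=> kn _ B mB; apply: sub_sigma_algebra.
exists (fun=> setT), (fun=> setT), (fun j => if j == k then B else setT).
split => // [j|]; first by case: ifP.
apply/seteqP; split => w /=.
  by move=> [_ h] j jn; split => //; case: eqP => // ->.
by move=> H; split => //; have := H k kn; rewrite eqxx => -[].
Qed.

Lemma mfxi1 k n : (k < n)%N -> measurable_fun (setT : set (OmT n)) (xi1 k : OmT n -> S).
Proof.
move=> kn _ B mB; apply: sub_sigma_algebra.
exists (fun j => if j == k then B else setT), (fun=> setT), (fun=> setT).
split => // [j|]; first by case: ifP.
apply/seteqP; split => w /=.
  by move=> [_ h] j jn; split => //; case: eqP => // ->.
by move=> H; split => //; have := H k kn; rewrite eqxx => -[].
Qed.

Lemma mfxi2 k n : (k < n)%N -> measurable_fun (setT : set (OmT n)) (xi2 k : OmT n -> S).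
Proof.
move=> kn _ B mB; apply: sub_sigma_algebra.
exists (fun=> setT), (fun j => if j == k then B else setT), (fun=> setT).
split => // [j|]; first by case: ifP.
apply/seteqP; split => w /=.
  by move=> [_ h] j jn; split => //; case: eqP => // ->.
by move=> H; split => //; have := H k kn; rewrite eqxx => -[].
Qed.
Hypothesis Fm1 : forall n, arru_Fmeas u y10 y20 rho1 rho2 xi1 xi2 U n (rho1 n).
Hypothesis Fm2 : forall n, arru_Fmeas u y10 y20 rho1 rho2 xi1 xi2 U n (rho2 n).
Hypothesis mu_ : measurable_fun setT u.

Lemma XfunE k : X k = (fun w => U k w * Y k w < Y1 k w).
Proof. by apply: funext => w; rewrite XE. Qed.

Lemma mfY n k : mf n (Y1 k) -> mf n (Y2 k) -> mf n (Y k).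
Proof. by move=> h1 h2; apply: measurable_funD. Qed.

Lemma mX n k : (k < n)%N -> mf n (Y1 k) -> mf n (Y2 k) ->
  measurable_fun (setT : set (OmT n)) (X k : OmT n -> bool).
Proof.
move=> kn h1 h2; rewrite XfunE; apply: measurable_fun_ltr => //.
apply: measurable_funM; [exact: mfU|exact: mfY].
Qed.

Lemma gen_sub n : (forall k, (k < n)%N -> mf n (Y1 k) /\ mf n (Y2 k)) ->
  <<s arru_gen u y10 y20 rho1 rho2 xi1 xi2 U n >> `<=` <<s rect xi1 xi2 U n >>.
Proof.
move=> IH; apply: smallest_sub; first exact: smallest_sigma_algebra.
move=> E [k kn [->|[A mA ->]]]; have [h1 h2] := IH k kn.
  rewrite (_ : [set w | X k w] = setT `&` (X k : OmT n -> bool) @^-1` [set true]).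
    by apply: (mX kn h1 h2 measurableT).
  by apply/seteqP; split => [w h|w [_ h]].
have mo : measurable_fun (setT : set (OmT n))
    (arru_obs u y10 y20 rho1 rho2 xi1 xi2 U k : OmT n -> S).
  by apply: measurable_fun_ifT; [exact: mX|exact: mfxi1|exact: mfxi2].
by have := mo measurableT _ mA; rewrite setTI.
Qed.

Lemma mrho n : (forall k, (k < n)%N -> mf n (Y1 k) /\ mf n (Y2 k)) ->
  mf n (rho1 n) /\ mf n (rho2 n).
Proof.
move=> IH; have hs := gen_sub IH.
by split => _ B mB; rewrite setTI; apply: hs; [exact: Fm1|exact: Fm2].
Qed.

Lemma Y1SE n : Y1 n.+1 = (fun w => Y1 n w +
  (if (U n w * Y n w < Y1 n w) && (Y1 n w <= rho1 n w * Y n w) then u (xi1 n w) else 0)).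
Proof. by apply: funext => w; rewrite Y1S XE ZleE. Qed.

Lemma Y2SE n : Y2 n.+1 = (fun w => Y2 n w +
  (if ~~ (U n w * Y n w < Y1 n w) && (rho2 n w * Y n w <= Y1 n w) then u (xi2 n w) else 0)).
Proof. by apply: funext => w; rewrite Y2S XE ZgeE. Qed.

Lemma meas_Y n : forall k, (k <= n)%N -> mf n (Y1 k) /\ mf n (Y2 k).
Proof.
elim: n => [|n IH] k.
  rewrite leqn0 => /eqP ->; split; exact: measurable_cst.
rewrite leq_eqVlt => /orP[/eqP ->|kn]; last first.
  by have [h1 h2] := IH k kn; split; apply: mf_mono h1 || apply: mf_mono h2.
have IH' : forall k, (k < n)%N -> mf n (Y1 k) /\ mf n (Y2 k).
  by move=> j jn; apply: IH; exact: ltnW.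
have [r1 r2] := mrho IH'.
have [h1 h2] := IH n (leqnn n).
have l1 := mf_mono (leqnSn n) h1.
have l2 := mf_mono (leqnSn n) h2.
have lY := mfY l1 l2.
have lr1 := mf_mono (leqnSn n) r1.
have lr2 := mf_mono (leqnSn n) r2.
have mUY : measurable_fun (setT : set (OmT n.+1)) (fun w => U n w * Y n w).
  by apply: measurable_funM => //; exact: mfU.
split.
  rewrite /mf Y1SE; apply: measurable_funD => //.
  apply: measurable_fun_ifT.
  - apply: measurable_and; first exact: measurable_fun_ltr.
    by apply: measurable_fun_ler => //; exact: measurable_funM.
  - by apply: measurableT_comp => //; exact: mfxi1.
  - exact: measurable_cst.
rewrite /mf Y2SE; apply: measurable_funD => //.
apply: measurable_fun_ifT.
- apply: measurable_and; first by apply: measurable_neg; exact: measurable_fun_ltr.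
  by apply: measurable_fun_ler => //; exact: measurable_funM.
- by apply: measurableT_comp => //; exact: mfxi2.
- exact: measurable_cst.
Qed.
Lemma mall n k : (k <= n)%N ->
  [/\ mf n (Y1 k), mf n (Y2 k), mf n (rho1 k) & mf n (rho2 k)].
Proof.
move=> kn; have [h1 h2] := meas_Y kn.
have [r1 r2] := mrho (fun j (jk : (j < k)%N) => meas_Y (ltnW jk)).
by split => //; apply: mf_mono kn _.
Qed.

Definition dlt (j : nat) : R := (j.+2%:R)^-1.

Lemma dlt01 j : 0 < dlt j < 1.
Proof.
rewrite /dlt invr_gt0 ltr0n /= invf_lt1 ?ltr0n //.
by rewrite ltr1n.
Qed.

Definition Fb j k w : bool := [&& Y1 k.+1 w == Y1 k w, Y2 k.+1 w == Y2 k w,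
  dlt j * Y k w <= Y1 k w, Y1 k w <= (1 - dlt j) * Y k w & rho2 k w <= rho1 k w].

Definition Ev m j n := [set w | forall k, (m <= k < n)%N -> Fb j k w].

Lemma mbool n (f : OmT n -> bool) : measurable_fun setT f ->
  <<s rect xi1 xi2 U n >> [set w | f w].
Proof.
move=> mf'.
rewrite (_ : [set w | f w] = setT `&` f @^-1` [set true]).
  by apply: (mf' measurableT).
by apply/seteqP; split => [w h|w [_ h]].
Qed.

Lemma Ev_meas m j n : <<s rect xi1 xi2 U n >> (Ev m j n).
Proof.
have -> : Ev m j n = \bigcap_k [set w | (m <= k < n)%N -> Fb j k w].
  apply/seteqP; split => w /= H k; first by move=> _; exact: H.
  by move=> kn; exact: H.
apply: (@bigcapT_measurable _ (OmT n)) => k.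
case: (ltnP k n) => kn; rewrite ?andbT ?andbF; last first.
  rewrite (_ : [set w | _] = setT); first exact: (@measurableT _ (OmT n)).
  by apply/seteqP; split.
have [a1 a2 a3 a4] := mall (ltnW kn).
have [c1 c2 _ _] := mall (kn : (k.+1 <= n)%N).
have mY := mfY a1 a2.
move: a1 a2 a3 a4 c1 c2 mY; rewrite /mf => a1 a2 a3 a4 c1 c2 mY.
have mFb : measurable_fun (setT : set (OmT n)) (fun w => (m <= k)%N ==> Fb j k w).
  case: (m <= k)%N => /=; last exact: measurable_cst.
  apply: measurable_and; first by apply: measurable_fun_eqr.
  apply: measurable_and; first by apply: measurable_fun_eqr.
  apply: measurable_and; first by apply: measurable_fun_ler => //; apply: measurable_funM.
  apply: measurable_and; first by apply: measurable_fun_ler => //; apply: measurable_funM.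
  by apply: measurable_fun_ler.
have := mbool mFb.
rewrite (_ : [set w | _] = [set w | (m <= k)%N -> Fb j k w]) //.
by apply/seteqP; split => w /= h; [move/implyP: h|apply/implyP].
Qed.
Lemma inc0_1 n w : Y1 n.+1 w = Y1 n w ->
  ~~ ((U n w * Y n w < Y1 n w) && (Y1 n w <= rho1 n w * Y n w)).
Proof.
rewrite Y1SE; case: ifP => // _ h; exfalso.
by have := u_pos (xi1 n w); move: h; lra.
Qed.

Lemma inc0_2 n w : Y2 n.+1 w = Y2 n w ->
  ~~ (~~ (U n w * Y n w < Y1 n w) && (rho2 n w * Y n w <= Y1 n w)).
Proof.
rewrite Y2SE; case: ifP => // _ h; exfalso.
by have := u_pos (xi2 n w); move: h; lra.
Qed.

Lemma step m j n : (m <= n)%N ->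
  (P (Ev m j n.+1) <= (1 - dlt j)%:E * P (Ev m j n))%E.
Proof.
move=> mn; set d := dlt j; have /andP[d0 d1] := dlt01 j.
have mE := @Ev_meas m j n.
have [a1 a2 r1 r2] := mall (leqnn n).
move: a1 a2 r1 r2; rewrite /mf => a1 a2 r1 r2.
have mY : measurable_fun (setT : set (OmT n)) (Y n) by apply: measurable_funD.
pose G1 := Ev m j n `&` [set w | rho1 n w * Y n w < Y1 n w].
pose G2 := Ev m j n `&` [set w | Y1 n w <= rho1 n w * Y n w].
have mG1 : <<s rect xi1 xi2 U n >> G1.
  apply: (@measurableI _ (OmT n)) => //; apply: mbool.
  by apply: measurable_fun_ltr => //; apply: measurable_funM.
have mG2 : <<s rect xi1 xi2 U n >> G2.
  apply: (@measurableI _ (OmT n)) => //; apply: mbool.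
  by apply: measurable_fun_ler => //; apply: measurable_funM.
have mO := @Gn_meas _ _ _ _ _ _ _ _ mxi1 mxi2 mU n.
pose C1 : set R := [set` `]-oo, 1 - d[].
pose C2 : set R := [set` `[d, +oo[].
have mC1 : measurable C1 by exact: measurable_itv.
have mC2 : measurable C2 by exact: measurable_itv.
have mX1 : measurable (U n @^-1` C1) by rewrite -[X in measurable X]setTI; apply: mU.
have mX2 : measurable (U n @^-1` C2) by rewrite -[X in measurable X]setTI; apply: mU.
have sub : Ev m j n.+1 `<=` (G1 `&` U n @^-1` C1) `|` (G2 `&` U n @^-1` C2).
  move=> w H.
  have Hn : Ev m j n w.
    by move=> k /andP[mk kn]; apply: H; rewrite mk ltnW.
  have := H n; rewrite mn ltnSn => /(_ isT) /and5P[/eqP e1 /eqP e2 hl hr hrr].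
  have hY := Y_pos n w.
  case: (ltP (rho1 n w * Y n w) (Y1 n w)) => hc.
    left; split; first by split.
    have := inc0_2 e2; rewrite negb_and negbK => /orP[h|h]; last first.
      exfalso; move/negP: h; apply.
      by apply: le_trans (ltW hc); rewrite ler_pM2r.
    rewrite /C1 /= in_itv /= -(ltr_pM2r hY); exact: lt_le_trans h hr.
  right; split; first by split.
  have := inc0_1 e1; rewrite hc andbT -leNgt => h.
  rewrite /C2 /= in_itv /= andbT -(ler_pM2r hY); exact: le_trans hl h.
have mG1O := mO _ mG1; have mG2O := mO _ mG2.
have mEn1 := @Gn_meas _ _ _ _ _ _ _ _ mxi1 mxi2 mU n.+1 _ (@Ev_meas m j n.+1).
have h1 : (P (Ev m j n.+1) <= P ((G1 `&` U n @^-1` C1) `|` (G2 `&` U n @^-1` C2)))%E.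
  apply: le_measure => //; rewrite inE //.
  by apply: measurableU; apply: measurableI.
apply: le_trans h1 _.
apply: le_trans (measureU2 _ _ _) _.
- exact: measurableI.
- exact: measurableI.
have e1 : P (G1 `&` U n @^-1` C1) = (P G1 * Lm C1)%E := indep mxi1 mxi2 mU hind mC1 mG1.
have e2 : P (G2 `&` U n @^-1` C2) = (P G2 * Lm C2)%E := indep mxi1 mxi2 mU hind mC2 mG2.
have l1 : Lm C1 = (1 - d)%:E.
  by rewrite /C1 Lm_ny // ?subr_gt0 // ltrBlDr ltrDl.
have l2 : Lm C2 = (1 - d)%:E by rewrite /C2 Lm_cy.
apply: (@le_trans _ _ (P G1 * Lm C1 + P G2 * Lm C2)%E).
  by apply: leeD; rewrite le_eqVlt; apply/orP; left; apply/eqP; [exact: e1|exact: e2].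
rewrite l1 l2.
rewrite -ge0_muleDl ?measure_ge0 // muleC; apply: lee_wpmul2l.
  by rewrite lee_fin subr_ge0 ltW.
rewrite -measureU //.
- rewrite (_ : G1 `|` G2 = Ev m j n) //.
  apply/seteqP; split => w; first by case=> -[].
  move=> Hw; case: (ltP (rho1 n w * Y n w) (Y1 n w)) => hc; [left|right]; by split.
- apply/seteqP; split => w // [[_ h1] [_ h2]].
  by move: h1 h2 => /= h1 h2; have := lt_le_trans h1 h2; rewrite ltxx.
Qed.
Lemma Ev_pow m j i : (P (Ev m j (m + i)) <= ((1 - dlt j) ^+ i)%:E)%E.
Proof.
elim: i => [|i IH].
  rewrite expr0 addn0; apply: probability_le1.
  exact: (@Gn_meas _ _ _ _ _ _ _ _ mxi1 mxi2 mU m _ (@Ev_meas m j m)).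
rewrite addnS; apply: le_trans (step j (leq_addr i m)) _.
rewrite exprS EFinM; apply: lee_wpmul2l => //.
by rewrite lee_fin subr_ge0; have /andP[_ /ltW] := dlt01 j.
Qed.

Lemma Ev_null m j : P.-negligible (\bigcap_i Ev m j (m + i)).
Proof.
have mE i : measurable (Ev m j (m + i)).
  exact: (@Gn_meas _ _ _ _ _ _ _ _ mxi1 mxi2 mU (m + i) _ (@Ev_meas m j (m + i))).
have mI : measurable (\bigcap_i Ev m j (m + i)) by exact: bigcapT_measurable.
exists (\bigcap_i Ev m j (m + i)); split => //.
have fin : P (\bigcap_i Ev m j (m + i)) \is a fin_num by exact: fin_num_measure.
rewrite -(fineK fin); congr (_%:E).
set p := fine _.
have p0 : 0 <= p by rewrite /p fine_ge0 // measure_ge0.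
have /andP[d0 d1] := dlt01 j.
have pn i : p <= (1 - dlt j) ^+ i.
  rewrite -lee_fin /p (fineK fin); apply: le_trans (Ev_pow m j i).
  by apply: le_measure; rewrite ?inE //; exact: bigcap_inf.
apply: (@arch0 R p (dlt j)^-1) => // i.
have hb := @pow_bound R (dlt j) i (ltac:(by rewrite (ltW d0) (ltW d1))).
have h1 : p * (1 + dlt j * i%:R) <= 1.
  apply: le_trans hb; apply: ler_wpM2r => //.
  by rewrite addr_ge0 // mulr_ge0 // ltW.
rewrite -div1r ler_pdivlMr // mulrAC -mulrA.
rewrite mulrDr mulr1 in h1; lra.
Qed.
Hypothesis hrho : forall n, {ae P, forall w, rho2 n w <= rho1 n w}.

Lemma Y_step n w : Y n w <= Y n.+1 w.
Proof.
rewrite /arru_Y Y1S Y2S.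
have := inc_ge0 (X n w && (Z n w <= rho1 n w)) (xi1 n w).
have := inc_ge0 (~~ X n w && (rho2 n w <= Z n w)) (xi2 n w).
lra.
Qed.

Lemma Y_jump k w : ~ (Y1 k.+1 w = Y1 k w /\ Y2 k.+1 w = Y2 k w) -> Y k w + a <= Y k.+1 w.
Proof.
rewrite /arru_Y !(Y1S, Y2S).
have := inc_ge0 (X k w && (Z k w <= rho1 k w)) (xi1 k w).
have := inc_ge0 (~~ X k w && (rho2 k w <= Z k w)) (xi2 k w).
have h1 := hu (xi1 k w); have h2 := hu (xi2 k w).
case/andP: h1 => h1 _; case/andP: h2 => h2 _.
case: ifP => _; case: ifP => _; rewrite ?addr0 => i1 i2 H //; try lra.
Qed.

Lemma unbY w : (forall m, exists k, (m <= k)%N /\ ~ (Y1 k.+1 w = Y1 k w /\ Y2 k.+1 w = Y2 k w)) ->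
  Y n w @[n --> \oo] --> +oo.
Proof.
move=> H.
have mono := mono_le (fun n => Y_step n w).
have unb : forall i : nat, exists n, Y 0 w + a * i%:R <= Y n w.
  elim=> [|i [n hn]]; first by exists 0%N; rewrite mulr0 addr0.
  have [k [nk hk]] := H n.
  exists k.+1; apply: le_trans (Y_jump hk).
  rewrite -natr1 mulrDr mulr1 addrA lerD2r; apply: le_trans hn _; exact: mono.
apply: cvg_of_ev => A.
have [n0 h0] := unb (Num.Def.trunc (A / a)).+1.
exists n0 => n hn; apply: le_trans (mono _ _ hn).
apply: le_trans h0.
have := truncnS_gt (A / a); rewrite ltr_pdivrMr // => hA.
have := Y_pos 0 w; rewrite mulrC; lra.
Qed.

Lemma parta : {ae P, forall w, Y n w @[n --> \oo] --> +oo}.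
Proof.
suff H : P.-negligible (~` [set w | Y n w @[n --> \oo] --> +oo]) by exact: H.
pose B := (\bigcup_k ~` [set w | rho2 k w <= rho1 k w]) `|`
  \bigcup_m \bigcup_j \bigcap_i Ev m j (m + i).
apply: (@negligibleS _ _ _ P B).
  move=> w /= nw.
  have [hg|hg] := pselect (forall k, rho2 k w <= rho1 k w); last first.
    by move/existsNP: hg => [k hk]; left; exists k.
  right.
  have [[m Hm]|nH] := pselect (exists m, forall k, (m <= k)%N ->
     Y1 k.+1 w = Y1 k w /\ Y2 k.+1 w = Y2 k w); last first.
    exfalso; apply: nw; apply: unbY => m.
    apply: contrapT => h; apply: nH; exists m => k mk.
    by apply: contrapT => hk; apply: h; exists k.
  have cst k : (m <= k)%N -> Y1 k w = Y1 m w /\ Y2 k w = Y2 m w.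
    move=> mk; rewrite -(subnKC mk); elim: (k - m)%N => [|i [IH1 IH2]].
      by rewrite addn0.
    by rewrite addnS; have [e1 e2] := Hm (m + i)%N (leq_addr _ _); rewrite e1 e2.
  pose t := Y m w / Y1 m w + Y m w / Y2 m w.
  pose j := Num.Def.trunc t.
  have ht : t < j.+1%:R := truncnS_gt t.
  have hY1 := Y1_pos m w; have hY2 := Y2_pos m w; have hY := Y_pos m w.
  have q1 : 0 < Y m w / Y1 m w by rewrite divr_gt0.
  have q2 : 0 < Y m w / Y2 m w by rewrite divr_gt0.
  have e2 : j.+2%:R = j.+1%:R + 1 :> R by rewrite natr1.
  have hd1 : dlt j * Y m w <= Y1 m w.
    rewrite /dlt mulrC ler_pdivrMr ?ltr0n //.
    have : Y m w / Y1 m w < j.+1%:R by rewrite /t in ht; lra.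
    rewrite ltr_pdivrMr // => h; rewrite e2; lra.
  have hd2 : dlt j * Y m w <= Y2 m w.
    rewrite /dlt mulrC ler_pdivrMr ?ltr0n //.
    have : Y m w / Y2 m w < j.+1%:R by rewrite /t in ht; lra.
    rewrite ltr_pdivrMr // => h; rewrite e2; lra.
  exists m => //; exists j => // i _ k /andP[mk _].
  have [c1 c2] := cst k mk; have [f1 f2] := Hm k mk.
  rewrite /Fb f1 f2 /arru_Y c1 c2 !eqxx hg andbT /=.
  move: hd1 hd2; rewrite /arru_Y => hd1 hd2.
  by apply/andP; split; lra.
apply: negligibleU.
  apply: negligible_bigcup => k; exact: hrho.
apply: negligible_bigcup => m; apply: negligible_bigcup => j; exact: Ev_null.
Qed.
Local Notation N1 := (arru_N1 u y10 y20 rho1 rho2 xi1 xi2 U).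
Local Notation N2 := (arru_N2 u y10 y20 rho1 rho2 xi1 xi2 U).

Lemma partb : {ae P, forall w,
  ((minn (N1 n w) (N2 n w))%:R : R) @[n --> \oo] --> +oo}.
Proof.
suff H : P.-negligible (~` [set w | ((minn (N1 n w) (N2 n w))%:R : R) @[n --> \oo] --> +oo])
  by exact: H.
apply: (@negligibleS _ _ _ P _ _ _ (negligibleU partb1 partb2)).
move=> w /= nw.
apply: contrapT => hnot; apply: nw.
have h1 : forall m, exists k, (m <= k)%N /\ X k w.
  move=> m; apply: contrapT => h; apply: hnot; left; exists m => k mk.
  by apply/negP => hk; apply: h; exists k.
have h2 : forall m, exists k, (m <= k)%N /\ ~~ X k w.
  move=> m; apply: contrapT => h; apply: hnot; right; exists m => k mk.
  by apply: contrapT => /negP hk; apply: h; exists k.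
have u1 := cnt_unb h1; have u2 := cnt_unb h2.
have m1 : forall n, (N1 n w <= N1 n.+1 w)%N.
  by move=> n; rewrite /arru_N1 big_ord_recr /= leq_addr.
have m2 : forall n, (N2 n w <= N2 n.+1 w)%N.
  by move=> n; rewrite /arru_N2 big_ord_recr /= leq_addr.
have ms : forall n, (minn (N1 n w) (N2 n w) <= minn (N1 n.+1 w) (N2 n.+1 w))%N.
  by move=> n; rewrite leq_min !geq_min (m1 n) (m2 n) orbT.
have mono := mono_len ms.
apply: cvg_of_ev => A.
have [n1 hn1] := u1 (Num.Def.trunc A).+1.
have [n2 hn2] := u2 (Num.Def.trunc A).+1.
exists (maxn n1 n2) => n hn.
apply: le_trans (ltW (truncnS_gt A)) _; rewrite ler_nat.
apply: leq_trans (mono _ _ hn); rewrite leq_min; apply/andP; split.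
  apply: leq_trans hn1 _; apply: (mono_len m1); exact: leq_maxl.
apply: leq_trans hn2 _; apply: (mono_len m2); exact: leq_maxr.
Qed.

End model.
Unset Implicit Arguments.

Theorem lemma4p2 (R : realType) (dO : measure_display) (Omega : measurableType dO)
  (P : probability Omega R) (dS : measure_display) (S : measurableType dS)
  (mu1 mu2 : probability S R) (a b : R) (u : S -> R)
  (xi1 xi2 : nat -> Omega -> S) (U : nat -> Omega -> R)
  (y10 y20 : R) (rho1 rho2 : nat -> Omega -> R) :
  0 < a -> a <= b ->
  measurable_fun setT u -> (forall s, a <= u s <= b) ->
  (forall k, measurable_fun setT (xi1 k)) ->
  (forall k, measurable_fun setT (xi2 k)) ->
  (forall k, measurable_fun setT (U k)) ->
  (* (xi1 k), (xi2 k), (U k) : mutually independent, i.i.d. mu1 / mu2 / Uniform(0,1) *)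
  (forall (n : nat) (A B : nat -> set S) (C : nat -> set R),
     (forall k, measurable (A k)) -> (forall k, measurable (B k)) ->
     (forall k, measurable (C k)) ->
     P [set w | forall k, (k < n)%N -> [/\ A k (xi1 k w), B k (xi2 k w) & C k (U k w)]]
     = (\prod_(k < n) (mu1 (A k) * mu2 (B k) * lebesgue_measure (C k `&` `]0%R, 1%R[)))%E) ->
  0 < y10 -> 0 < y20 ->
  (forall n, arru_Fmeas u y10 y20 rho1 rho2 xi1 xi2 U n (rho1 n)) ->
  (forall n, arru_Fmeas u y10 y20 rho1 rho2 xi1 xi2 U n (rho2 n)) ->
  (forall n w, 0 < rho1 n w < 1) -> (forall n w, 0 < rho2 n w < 1) ->
  (forall n, {ae P, forall w, rho2 n w <= rho1 n w}) ->
  {ae P, forall w, arru_Y u y10 y20 rho1 rho2 xi1 xi2 U n w @[n --> \oo] --> +oo} /\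
  {ae P, forall w,
     ((minn (arru_N1 u y10 y20 rho1 rho2 xi1 xi2 U n w)
            (arru_N2 u y10 y20 rho1 rho2 xi1 xi2 U n w))%:R : R) @[n --> \oo] --> +oo}.
Proof.
move=> ha hab mu hu mxi1 mxi2 mU hind hy10 hy20 F1 F2 r1 r2 hrho.
split; [eapply (parta (a:=a) (b:=b))|eapply (partb (a:=a) (b:=b))]; eassumption.
Qed.
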